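(* Let $A, C, D$ be binary random variables, with $A$ taking values $a,\overline{a}$, $C$ taking values $c,\overline{c}$, $D$ taking values $d,\overline{d}$, and let $Y$ be a real random variable with finite expectation. Suppose the joint distribution factorizes as \[ p(A,C,D,Y)=p(C)\,p(D\mid C)\,p(A\mid C)\,p(Y\mid A,C), \] and that every event $\{A=x, C=y, D=z\}$ has positive probability. Let $p(c)=0.5$ and $p(a\mid c)=p(\overline{a}\mid\overline{c})=p(d\mid c)=p(\overline{d}\mid\overline{c})\ge 0.5$. If \[ E[Y|a,c]-E[Y|a,\overline{c}]\ \ge\ E[Y|\overline{a},\overline{c}]-E[Y|\overline{a},c]\ \ge\ 0, \] then $RD_{crude}\ge RD_{obs}\ge RD_{true}$.
   Context: $RD_{true}=E[Y|a,c]p(c)+E[Y|a,\overline{c}]p(\overline{c})-E[Y|\overline{a},c]p(c)-E[Y|\overline{a},\overline{c}]p(\overline{c})$; $RD_{crude}=E[Y|a]-E[Y|\overline{a}]$; $RD_{obs}=E[Y|a,d]p(d)+E[Y|a,\overline{d}]p(\overline{d})-E[Y|\overline{a},d]p(d)-E[Y|\overline{a},\overline{d}]p(\overline{d})$. *)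

(* Defs.v *)
From HB Require Import structures.
From mathcomp Require Import all_boot all_order all_algebra.
From mathcomp Require Import all_classical all_reals all_analysis.
Set Implicit Arguments. Unset Strict Implicit. Unset Printing Implicit Defensive.
Import Order.TTheory GRing.Theory Num.Theory.
Local Open Scope classical_set_scope.
Local Open Scope ring_scope.

(* A binary random variable is encoded by a measurable event S:
   the variable takes its "positive" value (a, c, d) on S and its
   "negative" value (a bar, c bar, d bar) on ~` S.  [lit S b] is the
   event {variable = b}. *)
Definition lit (T : Type) (S : set T) (b : bool) : set T :=
  if b then S else ~` S.

Section Defs.
Context (d : measure_display) (T : measurableType d) (R : realType)
  (P : probability T R).

Definition Pr (S : set T) : R := fine (P S).

Definition cPr (S H : set T) : R := Pr (S `&` H) / Pr H.

Definition condE (Y : T -> R) (H : set T) : R :=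
  fine (\int[P]_(x in H) (Y x)%:E) / Pr H.

Definition factorizes (A C D : set T) (Y : T -> R) : Prop :=
  forall (x y z : bool) (B : set R), measurable B ->
    Pr (lit A x `&` lit C y `&` lit D z `&` Y @^-1` B) =
      Pr (lit C y) * cPr (lit D z) (lit C y) * cPr (lit A x) (lit C y)
      * cPr (Y @^-1` B) (lit A x `&` lit C y).

Definition RD_true (A C : set T) (Y : T -> R) : R :=
  condE Y (A `&` C) * Pr C + condE Y (A `&` ~` C) * Pr (~` C)
  - condE Y (~` A `&` C) * Pr C - condE Y (~` A `&` ~` C) * Pr (~` C).

Definition RD_crude (A : set T) (Y : T -> R) : R :=
  condE Y A - condE Y (~` A).

Definition RD_obs (A D : set T) (Y : T -> R) : R :=
  condE Y (A `&` D) * Pr D + condE Y (A `&` ~` D) * Pr (~` D)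
  - condE Y (~` A `&` D) * Pr D - condE Y (~` A `&` ~` D) * Pr (~` D).

End Defs.

(* Main.v *)
Require Import Defs.
From HB Require Import structures.
From mathcomp Require Import all_boot all_order all_algebra.
From mathcomp Require Import all_classical all_reals all_analysis.
From mathcomp Require Import measurable_realfun.
From mathcomp Require Import lra ring.
Import Order.TTheory GRing.Theory Num.Theory.
Local Open Scope classical_set_scope.
Local Open Scope ring_scope.

Lemma alg (R : realFieldType) (q e11 e10 e01 e00 : R) :
  1/2 <= q -> q < 1 -> e00 - e01 <= e11 - e10 ->
  let J11 := e11 * (q / 2) in let J10 := e10 * ((1 - q) / 2) in
  let J01 := e01 * ((1 - q) / 2) in let J00 := e00 * (q / 2) in
  let s := q * q / 2 + (1 - q) * (1 - q) / 2 in
  let t := q * (1 - q) / 2 + (1 - q) * q / 2 in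
  let tru := e11 * (1/2) + e10 * (1/2) - e01 * (1/2) - e00 * (1/2) in
  let obs := (q * J11 + (1 - q) * J10) / s * (1/2) + ((1 - q) * J11 + q * J10) / t * (1/2)
     - (q * J01 + (1 - q) * J00) / t * (1/2) - ((1 - q) * J01 + q * J00) / s * (1/2) in
  let cru := (J11 + J10) / (1/2) - (J01 + J00) / (1/2) in
  tru <= obs /\ obs <= cru.
Proof.
move=> hq hq1 h1 J11 J10 J01 J00 s t tru obs cru.
have sp : 0 < s by rewrite /s; nra.
have tp : 0 < t by rewrite /t; nra.
set X := (e11 - e10) - (e00 - e01).
have hX : 0 <= X by rewrite /X; lra.
have E1 : obs - tru = (2 * q - 1) * X / (4 * (2 * s)).
  rewrite /obs /tru /J11 /J10 /J01 /J00 /X /s /t.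
  field.
  by apply/andP; split; apply/eqP; nra.
have E3 : cru - tru = (2 * q - 1) * X / 2.
  rewrite /cru /tru /J11 /J10 /J01 /J00 /X.
  by field.
have E2 : cru - obs = (2 * q - 1) * X * (4 * s - 1) / (4 * (2 * s)).
  have -> : cru - obs = (cru - tru) - (obs - tru) by ring.
  rewrite E3 E1.
  have G : forall a c : R, c != 0 -> a / 2 - a / (4 * (2 * c)) = a * (4 * c - 1) / (4 * (2 * c)).
    by move=> a c hc; field; rewrite hc.
  by apply: G; rewrite gt_eqF.
have s1 : 0 <= 4 * s - 1 by rewrite /s; nra.
split; rewrite -subr_ge0.
  by rewrite E1; apply: divr_ge0; [apply: mulr_ge0 => //; lra | nra].
rewrite E2; apply: divr_ge0; [ | nra].
by apply: mulr_ge0 => //; apply: mulr_ge0 => //; lra.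
Qed.

Section Key.
Context (d : measure_display) (T : measurableType d) (R : realType)
  (P : probability T R) (Yv : {RV P >-> R}).
Local Open Scope ereal_scope.

Lemma push_int (S : set T) (f : {RV P >-> R}) (hf : forall x, f x = (Yv \_ S) x)
  (h : R -> R)
  (mh : measurable_fun [set: R] h) (h0 : h 0%R = 0%R) (hge : forall y, (0 <= h y)%R) :
  \int[P]_(x in S) (h (Yv x))%:E =
  \int[distribution P f]_(y in ~` [set 0%R]) (h y)%:E.
Proof.
rewrite integral_mkcond.
transitivity (\int[P]_x ((EFin \o h) \o f) x).
  apply: eq_integral => x _; rewrite /= hf /patch /=; case: ifP => //.
  by rewrite h0.
have mf : measurable_fun setT f by exact: measurable_funPT.
rewrite -(preimage_setT f).
rewrite -ge0_integral_pushforward //; first last.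
- by move=> z _; rewrite /= lee_fin.
- exact/measurable_EFinP.
all: try exact: mf.
transitivity (\int[pushforward P f]_y ((EFin \o h) \_ [set~ 0%R]) y); last first.
  by rewrite -integral_mkcond.
apply: eq_integral; first exact: mf. move=> y _.
have [->|yn0] := eqVneq y 0%R; first by rewrite /patch /= h0; case: ifPn.
by rewrite /patch ifT // inE; apply/eqP.
Qed.

Lemma mYS (S : set T) (mS : measurable S) : measurable_fun setT (Yv \_ S).
Proof.
apply/(measurable_restrictT _ mS). exact: measurable_funS (measurable_funPT Yv).
Qed.

Definition mkYS (S : set T) (mS : measurable S) : {RV P >-> R} :=
  MeasurableFun.Pack (MeasurableFun.Class (isMeasurableFun.Build _ _ _ _ (Yv \_ S) (mYS S mS))).

Lemma mkYSE S mS x : mkYS S mS x = (Yv \_ S) x.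
Proof. by []. Qed.

Lemma preYS (S : set T) (A : set R) : A `<=` ~` [set 0%R] ->
  (Yv \_ S) @^-1` A = S `&` Yv @^-1` A.
Proof.
move=> A0; apply/seteqP; split => x /=; rewrite /patch.
  case: ifPn => [|_ /A0 /=]; last by [].
  by rewrite inE => xS yA; split.
by move=> [xS yA]; rewrite ifT // inE.
Qed.

Lemma key (S E : set T) (mS : measurable S) (mE : measurable E) (k : {nonneg R})
  (H : forall B, measurable B -> P (S `&` E `&` Yv @^-1` B) = k%:num%:E * P (S `&` Yv @^-1` B))
  (h : R -> R)
  (mh : measurable_fun [set: R] h) (h0 : h 0%R = 0%R) (hge : forall y, (0 <= h y)%R) :
  \int[P]_(x in S `&` E) (h (Yv x))%:E = k%:num%:E * \int[P]_(x in S) (h (Yv x))%:E.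
Proof.
have mSE : measurable (S `&` E) by exact: measurableI.
rewrite (push_int _ _ (mkYSE _ mSE)) // (push_int _ _ (mkYSE _ mS)) //.
rewrite -ge0_integral_mscale //.
2: exact: measurableC.
2: exact/measurable_EFinP/measurable_funTS.
2: by move=> y _; rewrite lee_fin.
apply: eq_measure_integral => A mA A0.
transitivity (P (S `&` E `&` Yv @^-1` A)).
  by rewrite -(preYS (S `&` E) _ A0).
rewrite H //.
by rewrite -(preYS S _ A0).
Qed.
Lemma keyI (S E : set T) (mS : measurable S) (mE : measurable E) (k : {nonneg R})
  (H : forall B, measurable B -> P (S `&` E `&` Yv @^-1` B) = k%:num%:E * P (S `&` Yv @^-1` B))
  (intY : P.-integrable setT (EFin \o Yv)) :
  fine (\int[P]_(x in S `&` E) (Yv x)%:E) = (k%:num * fine (\int[P]_(x in S) (Yv x)%:E))%R.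
Proof.
have mSE : measurable (S `&` E) by exact: measurableI.
have intS : P.-integrable S (EFin \o Yv) := integrableS measurableT mS (@subsetT _ S) intY.
have intSE : P.-integrable (S `&` E) (EFin \o Yv) :=
  integrableS measurableT mSE (@subsetT _ _) intY.
have mp : measurable_fun [set: R] (fun y : R => Num.max y 0%R).
  exact: (measurable_funrpos (@measurable_id _ R setT)).
have mn : measurable_fun [set: R] (fun y : R => Num.max (- y)%R 0%R).
  exact: (measurable_funrneg (@measurable_id _ R setT)).
have kp : \int[P]_(x in S `&` E) ((EFin \o Yv)^\+ x) =
          k%:num%:E * \int[P]_(x in S) ((EFin \o Yv)^\+ x).
  rewrite funerpos.
  have p0 : Num.max 0%R 0%R = 0%R :> R by rewrite maxxx.
  have pge : forall y : R, (0 <= Num.max y 0%R)%R by move=> y; rewrite le_max lexx orbT.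
  exact: (key _ _ mS mE _ H _ mp p0 pge).
have kn : \int[P]_(x in S `&` E) ((EFin \o Yv)^\- x) =
          k%:num%:E * \int[P]_(x in S) ((EFin \o Yv)^\- x).
  rewrite funerneg.
  have p0 : Num.max (- 0)%R 0%R = 0%R :> R by rewrite oppr0 maxxx.
  have pge : forall y : R, (0 <= Num.max (- y) 0%R)%R by move=> y; rewrite le_max lexx orbT.
  exact: (key _ _ mS mE _ H _ mn p0 pge).
have fp := integrable_pos_fin_num mS intS.
have fn := integrable_neg_fin_num mS intS.
change (fine (\int[P]_(x in S `&` E) (EFin \o Yv) x) =
   (k%:num * fine (\int[P]_(x in S) (EFin \o Yv) x))%R).
rewrite integralE [X in _ = (_ * fine X)%R]integralE kp kn.
move: fp fn.
set a := \int[P]_(x in S) _.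
set b := \int[P]_(x in S) _.
move=> fp fn.
rewrite -(fineK fp) -(fineK fn) -!EFinM -!EFinB /=.
by rewrite mulrBr.
Qed.

End Key.

Section Help.
Context (d : measure_display) (T : measurableType d) (R : realType)
  (P : probability T R).

Lemma PrE (S : set T) : measurable S -> P S = (Pr P S)%:E.
Proof. by move=> mS; rewrite /Pr fineK // (fin_num_measure P _ mS). Qed.

Lemma Pr_ge0 (S : set T) : 0 <= Pr P S.
Proof. by rewrite /Pr fine_ge0 // measure_ge0. Qed.

Lemma cPr_ge0 (S H : set T) : 0 <= cPr P S H.
Proof. by rewrite /cPr divr_ge0 // Pr_ge0. Qed.

Lemma cPrK (S H : set T) : Pr P H != 0 -> Pr P (S `&` H) = cPr P S H * Pr P H.
Proof. by move=> h; rewrite /cPr divfK. Qed.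

Lemma splitU (S E : set T) : S = (S `&` E) `|` (S `&` ~` E).
Proof. by rewrite -setIUr setUv setIT. Qed.

Lemma splitD (S E : set T) : (S `&` E) `&` (S `&` ~` E) = set0.
Proof. by rewrite setIACA setICr setI0. Qed.

Lemma splitPr (S E : set T) : measurable S -> measurable E ->
  Pr P S = Pr P (S `&` E) + Pr P (S `&` ~` E).
Proof.
move=> mS mE.
have m1 : measurable (S `&` E) by exact: measurableI.
have m2 : measurable (S `&` ~` E) by apply: measurableI => //; exact: measurableC.
rewrite /Pr -fineD ?(fin_num_measure P _ m1) ?(fin_num_measure P _ m2) //.
by rewrite [in LHS](splitU S E) measureU // splitD.
Qed.

Lemma PrCE (S : set T) : measurable S -> Pr P (~` S) = 1 - Pr P S.
Proof.
move=> mS; rewrite /Pr probability_setC // (PrE _ mS) /=.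
by [].
Qed.

Lemma splitI (Y : T -> R) (S E : set T) : measurable S -> measurable E ->
  P.-integrable setT (EFin \o Y) ->
  fine (\int[P]_(x in S) (Y x)%:E) =
  fine (\int[P]_(x in S `&` E) (Y x)%:E) + fine (\int[P]_(x in S `&` ~` E) (Y x)%:E).
Proof.
move=> mS mE intY.
have m1 : measurable (S `&` E) by exact: measurableI.
have m2 : measurable (S `&` ~` E) by apply: measurableI => //; exact: measurableC.
have i1 : P.-integrable (S `&` E) (EFin \o Y) := integrableS measurableT m1 (@subsetT _ _) intY.
have i2 : P.-integrable (S `&` ~` E) (EFin \o Y) := integrableS measurableT m2 (@subsetT _ _) intY.
rewrite -fineD ?(integrable_fin_num m1 i1) ?(integrable_fin_num m2 i2) //.
rewrite {1}(splitU S E) integral_setU //.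
- rewrite -splitU; case/integrableP: intY => mY _.
  exact: (measurable_funS measurableT (@subsetT _ S) mY).
- by apply/disj_set2P; rewrite splitD.
Qed.

Lemma mlit (S : set T) b : measurable S -> measurable (lit S b).
Proof. by case: b => //= mS; exact: measurableC. Qed.

End Help.

Section Fact.
Context (d : measure_display) (T : measurableType d) (R : realType)
  (P : probability T R) (A C D : set T) (Y : {RV P >-> R})
  (mA : measurable A) (mC : measurable C) (mD : measurable D)
  (intY : P.-integrable setT (EFin \o Y))
  (fact : factorizes P A C D Y).

Lemma factT x y z : 0 < Pr P (lit A x `&` lit C y) ->
  Pr P (lit A x `&` lit C y `&` lit D z) =
  Pr P (lit C y) * cPr P (lit D z) (lit C y) * cPr P (lit A x) (lit C y).
Proof.
move=> hp; have := fact x y z setT measurableT.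
rewrite preimage_setT setIT => ->.
by rewrite /cPr setTI divff ?mulr1 // gt_eqF.
Qed.

Lemma mpre (B : set R) : measurable B -> measurable (Y @^-1` B).
Proof. by move=> mB; rewrite -[_ @^-1` _]setTI; exact: measurable_funPT. Qed.

Lemma factB x y z (B : set R) : measurable B -> 0 < Pr P (lit C y) ->
  0 < Pr P (lit A x `&` lit C y) ->
  P (lit A x `&` lit C y `&` lit D z `&` Y @^-1` B) =
  ((cPr P (lit D z) (lit C y))%:E * P (lit A x `&` lit C y `&` Y @^-1` B))%E.
Proof.
move=> mB hC hAC.
have mAx := mlit _ _ _ x mA; have mCy := mlit _ _ _ y mC; have mDz := mlit _ _ _ z mD.
have mYB := mpre _ mB.
rewrite !PrE; try by repeat apply: measurableI.
rewrite fact // -EFinM; congr EFin.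
rewrite /cPr (setIC (Y @^-1` B)).
field; apply/andP; split; rewrite gt_eqF //.
Qed.

Lemma IatomE x y z : 0 < Pr P (lit C y) -> 0 < Pr P (lit A x `&` lit C y) ->
  fine (\int[P]_(t in lit A x `&` lit C y `&` lit D z) (Y t)%:E) =
  cPr P (lit D z) (lit C y) * fine (\int[P]_(t in lit A x `&` lit C y) (Y t)%:E).
Proof.
move=> hC hAC.
have mAx := mlit _ _ _ x mA; have mCy := mlit _ _ _ y mC; have mDz := mlit _ _ _ z mD.
have mS : measurable (lit A x `&` lit C y) by exact: measurableI.
pose k : {nonneg R} := NngNum (@cPr_ge0 _ _ _ P (lit D z) (lit C y)).
have := keyI _ _ _ _ Y _ _ mS mDz k _ intY.
apply => B mB.
exact: factB.
Qed.

End Fact.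

Theorem theorem2 (d : measure_display) (T : measurableType d) (R : realType)
  (P : probability T R) (A C D : set T) (Y : {RV P >-> R})
  (mA : measurable A) (mC : measurable C) (mD : measurable D)
  (intY : P.-integrable setT (EFin \o Y))
  (fact : factorizes P A C D Y)
  (pos : forall x y z : bool, 0 < Pr P (lit A x `&` lit C y `&` lit D z))
  (q : R)
  (hc : Pr P C = 1 / 2)
  (hac : cPr P A C = q) (hac' : cPr P (~` A) (~` C) = q)
  (hdc : cPr P D C = q) (hdc' : cPr P (~` D) (~` C) = q)
  (hq : 1 / 2 <= q)
  (h1 : condE P Y (~` A `&` ~` C) - condE P Y (~` A `&` C)
          <= condE P Y (A `&` C) - condE P Y (A `&` ~` C))
  (h2 : 0 <= condE P Y (~` A `&` ~` C) - condE P Y (~` A `&` C)) :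
  RD_true P A C Y <= RD_obs P A D Y /\ RD_obs P A D Y <= RD_crude P A Y.
Proof.
rewrite /RD_true /RD_obs /RD_crude.
have mnA := measurableC mA; have mnC := measurableC mC; have mnD := measurableC mD.
have sPr := splitPr _ _ _ P.
have sI := splitI _ _ _ P Y.
have FT := @factT _ _ _ _ _ _ _ _ fact.
have IA := IatomE _ _ _ _ _ _ _ _ mA mC mD intY fact.
have PnC : Pr P (~` C) = 1 / 2 by rewrite (PrCE _ _ _ P C mC) hc; lra.
have hCy : forall y, 0 < Pr P (lit C y) by case => /=; [rewrite hc | rewrite PnC]; lra.
have pAC : forall x y, 0 < Pr P (lit A x `&` lit C y).
  move=> x y.
  have mxy : measurable (lit A x `&` lit C y) by apply: measurableI; apply: mlit.
  rewrite (sPr _ D mxy mD); exact: addr_gt0 (pos x y true) (pos x y false).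
have nC : Pr P C != 0 by rewrite hc; apply: lt0r_neq0; lra.
have nnC : Pr P (~` C) != 0 by rewrite PnC; apply: lt0r_neq0; lra.
have PAC : Pr P (A `&` C) = q * (1 / 2) by rewrite cPrK // hac hc.
have PnAnC : Pr P (~` A `&` ~` C) = q * (1 / 2) by rewrite cPrK // hac' PnC.
have PDC : Pr P (D `&` C) = q * (1 / 2) by rewrite cPrK // hdc hc.
have PnDnC : Pr P (~` D `&` ~` C) = q * (1 / 2) by rewrite cPrK // hdc' PnC.
have PnAC : Pr P (~` A `&` C) = (1 - q) * (1 / 2).
  have := sPr C A mC mA; rewrite (setIC C A) (setIC C (~` A)) PAC hc; lra.
have PAnC : Pr P (A `&` ~` C) = (1 - q) * (1 / 2).
  have := sPr (~` C) A mnC mA; rewrite (setIC (~` C) A) (setIC (~` C) (~` A)) PnAnC PnC; lra.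
have PnDC : Pr P (~` D `&` C) = (1 - q) * (1 / 2).
  have := sPr C D mC mD; rewrite (setIC C D) (setIC C (~` D)) PDC hc; lra.
have PDnC : Pr P (D `&` ~` C) = (1 - q) * (1 / 2).
  have := sPr (~` C) D mnC mD; rewrite (setIC (~` C) D) (setIC (~` C) (~` D)) PnDnC PnC; lra.
have hq1 : q < 1 by have := pAC false true; rewrite /= PnAC; lra.
have cnAC : cPr P (~` A) C = 1 - q by rewrite /cPr PnAC hc; field.
have cAnC : cPr P A (~` C) = 1 - q by rewrite /cPr PAnC PnC; field.
have cnDC : cPr P (~` D) C = 1 - q by rewrite /cPr PnDC hc; field.
have cDnC : cPr P D (~` C) = 1 - q by rewrite /cPr PDnC PnC; field.
have IE11 : fine (\int[P]_(t in A `&` C) (Y t)%:E) = condE P Y (A `&` C) * Pr P (A `&` C).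
  by rewrite /condE divfK // lt0r_neq0 // (pAC true true).
have P111 : Pr P (A `&` C `&` D) = Pr P C * cPr P D C * cPr P A C :=
  FT true true true (pAC true true).
have I111 : fine (\int[P]_(t in A `&` C `&` D) (Y t)%:E) = cPr P D C * fine (\int[P]_(t in A `&` C) (Y t)%:E) :=
  IA true true true (hCy true) (pAC true true).
have P110 : Pr P (A `&` C `&` (~` D)) = Pr P C * cPr P (~` D) C * cPr P A C :=
  FT true true false (pAC true true).
have I110 : fine (\int[P]_(t in A `&` C `&` (~` D)) (Y t)%:E) = cPr P (~` D) C * fine (\int[P]_(t in A `&` C) (Y t)%:E) :=
  IA true true false (hCy true) (pAC true true).
have IE10 : fine (\int[P]_(t in A `&` (~` C)) (Y t)%:E) = condE P Y (A `&` (~` C)) * Pr P (A `&` (~` C)).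
  by rewrite /condE divfK // lt0r_neq0 // (pAC true false).
have P101 : Pr P (A `&` (~` C) `&` D) = Pr P (~` C) * cPr P D (~` C) * cPr P A (~` C) :=
  FT true false true (pAC true false).
have I101 : fine (\int[P]_(t in A `&` (~` C) `&` D) (Y t)%:E) = cPr P D (~` C) * fine (\int[P]_(t in A `&` (~` C)) (Y t)%:E) :=
  IA true false true (hCy false) (pAC true false).
have P100 : Pr P (A `&` (~` C) `&` (~` D)) = Pr P (~` C) * cPr P (~` D) (~` C) * cPr P A (~` C) :=
  FT true false false (pAC true false).
have I100 : fine (\int[P]_(t in A `&` (~` C) `&` (~` D)) (Y t)%:E) = cPr P (~` D) (~` C) * fine (\int[P]_(t in A `&` (~` C)) (Y t)%:E) :=
  IA true false false (hCy false) (pAC true false).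
have IE01 : fine (\int[P]_(t in (~` A) `&` C) (Y t)%:E) = condE P Y ((~` A) `&` C) * Pr P ((~` A) `&` C).
  by rewrite /condE divfK // lt0r_neq0 // (pAC false true).
have P011 : Pr P ((~` A) `&` C `&` D) = Pr P C * cPr P D C * cPr P (~` A) C :=
  FT false true true (pAC false true).
have I011 : fine (\int[P]_(t in (~` A) `&` C `&` D) (Y t)%:E) = cPr P D C * fine (\int[P]_(t in (~` A) `&` C) (Y t)%:E) :=
  IA false true true (hCy true) (pAC false true).
have P010 : Pr P ((~` A) `&` C `&` (~` D)) = Pr P C * cPr P (~` D) C * cPr P (~` A) C :=
  FT false true false (pAC false true).
have I010 : fine (\int[P]_(t in (~` A) `&` C `&` (~` D)) (Y t)%:E) = cPr P (~` D) C * fine (\int[P]_(t in (~` A) `&` C) (Y t)%:E) :=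
  IA false true false (hCy true) (pAC false true).
have IE00 : fine (\int[P]_(t in (~` A) `&` (~` C)) (Y t)%:E) = condE P Y ((~` A) `&` (~` C)) * Pr P ((~` A) `&` (~` C)).
  by rewrite /condE divfK // lt0r_neq0 // (pAC false false).
have P001 : Pr P ((~` A) `&` (~` C) `&` D) = Pr P (~` C) * cPr P D (~` C) * cPr P (~` A) (~` C) :=
  FT false false true (pAC false false).
have I001 : fine (\int[P]_(t in (~` A) `&` (~` C) `&` D) (Y t)%:E) = cPr P D (~` C) * fine (\int[P]_(t in (~` A) `&` (~` C)) (Y t)%:E) :=
  IA false false true (hCy false) (pAC false false).
have P000 : Pr P ((~` A) `&` (~` C) `&` (~` D)) = Pr P (~` C) * cPr P (~` D) (~` C) * cPr P (~` A) (~` C) :=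
  FT false false false (pAC false false).
have I000 : fine (\int[P]_(t in (~` A) `&` (~` C) `&` (~` D)) (Y t)%:E) = cPr P (~` D) (~` C) * fine (\int[P]_(t in (~` A) `&` (~` C)) (Y t)%:E) :=
  IA false false false (hCy false) (pAC false false).
have c11 : condE P Y (A `&` D) = (q * (condE P Y (A `&` C) * (q / 2)) + (1 - q) * (condE P Y (A `&` ~` C) * ((1 - q) / 2))) / (q * q / 2 + (1 - q) * (1 - q) / 2).
  have mS11 : measurable (A `&` D) by exact: measurableI.
  rewrite {1}/condE (sI (A `&` D) C mS11 mC intY).
  rewrite [Pr P (A `&` D)](sPr _ C mS11 mC) !(setIAC A D).
  rewrite I111 I101 P111 P101 IE11 IE10 ?PAC ?PAnC ?PnAC ?PnAnC ?hac ?hac' ?hdc ?hdc' ?cnAC ?cAnC ?cnDC ?cDnC ?hc ?PnC.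
  field; rewrite ?unitfE; try done; repeat (apply/andP; split); try apply/eqP; nra.
have c10 : condE P Y (A `&` (~` D)) = ((1 - q) * (condE P Y (A `&` C) * (q / 2)) + q * (condE P Y (A `&` ~` C) * ((1 - q) / 2))) / (q * (1 - q) / 2 + (1 - q) * q / 2).
  have mS10 : measurable (A `&` (~` D)) by exact: measurableI.
  rewrite {1}/condE (sI (A `&` (~` D)) C mS10 mC intY).
  rewrite [Pr P (A `&` (~` D))](sPr _ C mS10 mC) !(setIAC A (~` D)).
  rewrite I110 I100 P110 P100 IE11 IE10 ?PAC ?PAnC ?PnAC ?PnAnC ?hac ?hac' ?hdc ?hdc' ?cnAC ?cAnC ?cnDC ?cDnC ?hc ?PnC.
  field; rewrite ?unitfE; try done; repeat (apply/andP; split); try apply/eqP; nra.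
have c01 : condE P Y ((~` A) `&` D) = (q * (condE P Y (~` A `&` C) * ((1 - q) / 2)) + (1 - q) * (condE P Y (~` A `&` ~` C) * (q / 2))) / (q * (1 - q) / 2 + (1 - q) * q / 2).
  have mS01 : measurable ((~` A) `&` D) by exact: measurableI.
  rewrite {1}/condE (sI (~` A `&` D) C mS01 mC intY).
  rewrite [Pr P (~` A `&` D)](sPr _ C mS01 mC) !(setIAC (~` A) D).
  rewrite I011 I001 P011 P001 IE01 IE00 ?PAC ?PAnC ?PnAC ?PnAnC ?hac ?hac' ?hdc ?hdc' ?cnAC ?cAnC ?cnDC ?cDnC ?hc ?PnC.
  field; rewrite ?unitfE; try done; repeat (apply/andP; split); try apply/eqP; nra.
have c00 : condE P Y ((~` A) `&` (~` D)) = ((1 - q) * (condE P Y (~` A `&` C) * ((1 - q) / 2)) + q * (condE P Y (~` A `&` ~` C) * (q / 2))) / (q * q / 2 + (1 - q) * (1 - q) / 2).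
  have mS00 : measurable ((~` A) `&` (~` D)) by exact: measurableI.
  rewrite {1}/condE (sI (~` A `&` ~` D) C mS00 mC intY).
  rewrite [Pr P (~` A `&` ~` D)](sPr _ C mS00 mC) !(setIAC (~` A) (~` D)).
  rewrite I010 I000 P010 P000 IE01 IE00 ?PAC ?PAnC ?PnAC ?PnAnC ?hac ?hac' ?hdc ?hdc' ?cnAC ?cAnC ?cnDC ?cDnC ?hc ?PnC.
  field; rewrite ?unitfE; try done; repeat (apply/andP; split); try apply/eqP; nra.
have cA1 : condE P Y A = ((condE P Y (A `&` C) * (q / 2)) + (condE P Y (A `&` ~` C) * ((1 - q) / 2))) / (1 / 2).
  have PA : Pr P A = 1 / 2.
    rewrite (sPr _ C _ mC) ?mA // ?PAC ?PAnC ?PnAC ?PnAnC ?hac ?hac' ?hdc ?hdc' ?cnAC ?cAnC ?cnDC ?cDnC ?hc ?PnC; lra.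
  rewrite {1}/condE (sI A C mA mC intY) PA IE11 IE10 ?PAC ?PAnC ?PnAC ?PnAnC ?hac ?hac' ?hdc ?hdc' ?cnAC ?cAnC ?cnDC ?cDnC ?hc ?PnC.
  field; rewrite ?unitfE; try done; repeat (apply/andP; split); try apply/eqP; nra.
have cA0 : condE P Y (~` A) = ((condE P Y (~` A `&` C) * ((1 - q) / 2)) + (condE P Y (~` A `&` ~` C) * (q / 2))) / (1 / 2).
  have PA : Pr P (~` A) = 1 / 2.
    rewrite (sPr _ C _ mC) ?mnA // ?PAC ?PAnC ?PnAC ?PnAnC ?hac ?hac' ?hdc ?hdc' ?cnAC ?cAnC ?cnDC ?cDnC ?hc ?PnC; lra.
  rewrite {1}/condE (sI (~` A) C mnA mC intY) PA IE01 IE00 ?PAC ?PAnC ?PnAC ?PnAnC ?hac ?hac' ?hdc ?hdc' ?cnAC ?cAnC ?cnDC ?cDnC ?hc ?PnC.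
  field; rewrite ?unitfE; try done; repeat (apply/andP; split); try apply/eqP; nra.
have PD : Pr P D = 1 / 2 by rewrite (sPr _ C mD mC) PDC PDnC; lra.
have PnD : Pr P (~` D) = 1 / 2 by rewrite (PrCE _ _ _ P D mD) PD; lra.
rewrite c11 c10 c01 c00 cA1 cA0 hc PnC PD PnD.
have [H1 H2] := @alg _ _ _ _ _ _ hq hq1 h1.
by split; [exact: H1 | exact: H2].
Qed.
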